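(* Let $q$ be a prime power, $m,n$ positive integers and $0\le v\le n$. For every elementary linear subspace $\mathcal V$ of $\mathrm{GF}(q^m)^n$ of dimension $v$, the rank diameter satisfies $\delta(\mathcal V)\le v$. Moreover, if $v\le m$, then $\delta(\mathcal V)=v$.
   Context: For $\mathbf x=(x_0,\dots,x_{n-1})\in\mathrm{GF}(q^m)^n$, $\mathrm{rk}(\mathbf x)$ is the dimension over $\mathrm{GF}(q)$ of the $\mathrm{GF}(q)$-span of $x_0,\dots,x_{n-1}$. A linear subspace of the $\mathrm{GF}(q^m)$-vector space $\mathrm{GF}(q^m)^n$ is elementary if it has a basis consisting of vectors in $\mathrm{GF}(q)^n$. The rank diameter of a linear subspace $\mathcal L$ is $\delta(\mathcal L)=\max_{\mathbf x\in\mathcal L}\mathrm{rk}(\mathbf x)$. *)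

(* Defs.v *)
From HB Require Import structures.
From mathcomp Require Import all_boot all_order all_algebra all_field.
From mathcomp Require Import boolp.
Set Implicit Arguments. Unset Strict Implicit. Unset Printing Implicit Defensive.
Import GRing.Theory.
Local Open Scope ring_scope.

(* GF(q) is modelled by a finite field F, GF(q^m) by a field extension L of F
   of degree m over F.  Vectors of GF(q^m)^n are row vectors 'rV[L]_n. *)

Definition rk (F : finFieldType) (L : fieldExtType F) (n : nat) (x : 'rV[L]_n) : nat :=
  \dim (<<[seq x ord0 i | i <- enum 'I_n]>>%VS : {vspace L}).

Definition over_base (F : finFieldType) (L : fieldExtType F) (n : nat) (x : 'rV[L]_n) : Prop :=
  forall i : 'I_n, exists c : F, x ord0 i = c%:A.

Definition elementary (F : finFieldType) (L : fieldExtType F) (n : nat)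
    (V : {vspace 'rV[L]_n}) : Prop :=
  exists b : seq 'rV[L]_n, basis_of V b /\ (forall x, x \in b -> over_base x).

(* rank diameter: max of rk over V (rk x <= n always, and rk 0 = 0) *)
Definition rank_diam (F : finFieldType) (L : fieldExtType F) (n : nat)
    (V : {vspace 'rV[L]_n}) : nat :=
  (\max_(k < n.+1 | `[< exists2 x, x \in V & rk x = k >]) k)%N.

(* Main.v *)
Require Import Defs.
From HB Require Import structures.
From mathcomp Require Import all_boot all_order all_algebra all_field.
From mathcomp Require Import boolp.
Set Implicit Arguments. Unset Strict Implicit. Unset Printing Implicit Defensive.
Import GRing.Theory.

Section Aux.
Local Open Scope ring_scope.
Variables (F : finFieldType) (L : fieldExtType F) (n : nat).

Lemma entry_sum (s : seq 'rV[L]_n) k (c : 'I_k -> L) i :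
  (\sum_(j < k) c j *: s`_j) ord0 i = \sum_(j < k) c j * s`_j ord0 i.
Proof. by rewrite summxE; apply: eq_bigr => j _; rewrite mxE. Qed.

Lemma rk_le (s : seq 'rV[L]_n) (c : 'I_(size s) -> L) :
  (forall y, y \in s -> over_base y) ->
  (rk (\sum_(j < size s) c j *: s`_j) <= size s)%N.
Proof.
move=> hs; rewrite /rk.
set cs := [seq c j | j <- enum 'I_(size s)].
have scs : size cs = size s by rewrite size_map size_enum_ord.
rewrite -[in X in (_ <= X)%N]scs.
apply: leq_trans (dim_span cs); apply: dimvS; apply/span_subvP => y.
case/mapP => i _ ->; rewrite entry_sum; apply: memv_suml => j _.
have [e ->] := hs _ (mem_nth 0 (ltn_ord j)) i.
rewrite mulr_algr; apply: memvZ; apply: memv_span.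
by apply: map_f; rewrite mem_enum.
Qed.

Lemma rk_ge (s : seq 'rV[L]_n) (a : seq L) :
  (forall y, y \in s -> over_base y) -> free s -> size a = size s -> free a ->
  (size s <= rk (\sum_(j < size s) a`_j *: s`_j))%N.
Proof.
move=> hs fs sa fa; rewrite /rk.
set k := size s.
set x := \sum_(j < k) a`_j *: s`_j.
pose C : 'M[F]_(k, n) := \matrix_(j, i) odflt 0 [pick c : F | s`_j ord0 i == c%:A].
have hC : forall (j : 'I_k) i, s`_j ord0 i = (C j i)%:A.
  move=> j i; rewrite mxE; have [e he] := hs _ (mem_nth 0 (ltn_ord j)) i.
  case: pickP => [c /eqP //|H]; by have := H e; rewrite he eqxx.
have rfC : row_free C.
  apply: inj_row_free => u uC.
  have H0 : \sum_(j < size (in_tuple s)) (u ord0 j)%:A *: (in_tuple s)`_j = 0.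
    apply/rowP => i; rewrite mxE; change (\sum_(j < size (in_tuple s)) (u ord0 j)%:A *: (in_tuple s)`_j) with (\sum_(j < k) (u ord0 j)%:A *: s`_j); rewrite entry_sum.
    transitivity (((u *m C) ord0 i)%:A : L); last by rewrite uC mxE scale0r.
    rewrite mxE scaler_suml; apply: eq_bigr => j _.
    by rewrite hC mulr_algr -scalerA !scalerA mulrC.
  apply/matrixP => r j; rewrite ord1 mxE.
  have fs0 : free (in_tuple s) := fs; move/freeP: fs0 => fsP.
  have := fsP _ H0 j; move/eqP; rewrite scaler_eq0 oner_eq0 orbF.
  by move/eqP.
have [D CD] := row_freeP rfC.
have xe : forall i, x ord0 i = \sum_(l < k) C l i *: a`_l.
  move=> i; rewrite entry_sum; apply: eq_bigr => l _.
  by rewrite hC mulr_algr.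
have ha : forall j : 'I_k, a`_j = \sum_(i < n) D i j *: x ord0 i.
  move=> j.
  under eq_bigr => i _ do rewrite xe scaler_sumr.
  rewrite exchange_big /=.
  transitivity (\sum_(l < k) (C *m D) l j *: a`_l); last first.
    apply: eq_bigr => l _; rewrite mxE scaler_suml; apply: eq_bigr => i _.
    by rewrite scalerA mulrC.
  rewrite CD (bigD1 j) //= big1 ?addr0 => [|l /negbTE nlj].
    by rewrite mxE eqxx scale1r.
  by rewrite mxE nlj scale0r.
have <- : size a = k by [].
rewrite -(eqP fa); apply: dimvS; apply/span_subvP => y /(nthP 0) [j ja <-].
have ja' : (j < k)%N by rewrite /k -sa.
rewrite (ha (Ordinal ja')); apply: memv_suml => i _; apply: memvZ.
apply: memv_span; apply: map_f; by rewrite mem_enum.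
Qed.

End Aux.

Theorem proposition2 (F : finFieldType) (L : fieldExtType F) (q m n v : nat) :
  #|F| = q -> \dim (fullv : {vspace L}) = m -> (0 < m)%N -> (0 < n)%N -> (v <= n)%N ->
  forall V : {vspace 'rV[L]_n},
    elementary V -> \dim V = v ->
    (rank_diam V <= v)%N /\ ((v <= m)%N -> rank_diam V = v).
Proof.
move=> _ dimL _ _ vn V [b [bb hb]] dV.
have sb : size b = v by rewrite -dV -(span_basis bb) (eqP (basis_free bb)).
have up : (rank_diam V <= v)%N.
  apply/bigmax_leqP => k /asboolP [x xV <-].
  rewrite -(span_basis bb) in xV.
  have xt : x \in <<in_tuple b>>%VS by [].
  rewrite (coord_span xt) -sb.
  exact: (rk_le (s := b) (fun j => coord (in_tuple b) j x)).
split => // vm; apply/eqP; rewrite eqn_leq up /=.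
set a := take v (vbasis (fullv : {vspace L})).
have sa : size a = size b by rewrite size_take size_tuple dimL sb; case: ltngtP vm.
have fa : free a.
  apply: (@catl_free _ _ (drop v (vbasis (fullv : {vspace L})))).
  rewrite cat_take_drop; exact: basis_free (vbasisP _).
set x := (\sum_(j < size b) a`_j *: b`_j)%R.
have xV : x \in V.
  rewrite -(span_basis bb); apply: memv_suml => j _; apply: memvZ.
  by apply: memv_span; apply: mem_nth.
have rkx : rk x = v.
  apply/eqP; rewrite eqn_leq -{1}sb rk_le // -{1}sb.
  exact: rk_ge hb (basis_free bb) sa fa.
have vlt : (v < n.+1)%N by [].
apply: leq_trans (leq_bigmax_cond (Ordinal vlt) _) => //.
by apply/asboolP; exists x.
Qed.
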